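(* Let $n\ge1$ and on $\mathbb{D}^n$ (coordinates $\alpha_0,\dots,\alpha_{n-1}$) use the Poisson bracket described in the context. Let $\Phi_k$ be the monic orthogonal polynomials on the unit circle and $\Phi_k^*$ their reversed polynomials. Then for all $z,w$, \[ \{\Phi_{n-1}(z),\Phi_n(w)\}=-i\bar\alpha_{n-1}\,w\,\frac{\Phi_{n-1}(z)\Phi_{n-1}^*(w)-\Phi_{n-1}(w)\Phi_{n-1}^*(z)}{z-w}, \] \[ \{\Phi_n(z),\Phi_{n-1}^*(w)\}=i\,zw\,\frac{\Phi_{n-1}(z)\Phi_{n-1}^*(w)-\Phi_{n-1}(w)\Phi_{n-1}^*(z)}{z-w}. \]
   Context: Let $\rho_j=(1-|\alpha_j|^2)^{1/2}$; the Poisson bracket is $\{f,g\}=\sum_{j=0}^{n-1}i\rho_j^2\bigl(\frac{\partial f}{\partial\bar\alpha_j}\frac{\partial g}{\partial\alpha_j}-\frac{\partial f}{\partial\alpha_j}\frac{\partial g}{\partial\bar\alpha_j}\bigr)$ (Wirtinger derivatives), i.e. $\{\alpha_j,\alpha_k\}=0$, $\{\alpha_j,\bar\alpha_k\}=-i\rho_j^2\delta_{jk}$; $z,w$ are held fixed. $\Phi_0=1$, $\Phi_{k+1}(z)=z\Phi_k(z)-\bar\alpha_k\Phi_k^*(z)$, $\Phi_k^*(z)=z^k\overline{\Phi_k(1/\bar z)}$. The identities are identities of polynomials in $z,w$. *)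

(* Defs.v *)
From HB Require Import structures.
From mathcomp Require Import all_boot all_order all_algebra.
From mathcomp Require Import mpoly.
Set Implicit Arguments. Unset Strict Implicit. Unset Printing Implicit Defensive.
Import Order.TTheory GRing.Theory Num.Theory.
Local Open Scope ring_scope.

(* Functions of (alpha_0,...,alpha_{n-1}) in D^n are modelled as polynomials in
   the 2n independent variables alpha_j = 'X_(lshift n j) and
   conj(alpha_j) = 'X_(rshift n j), with coefficients in a numeric closed
   field C (e.g. the complex numbers).  Wirtinger derivatives d/d alpha_j,
   d/d conj(alpha_j) are the formal partial derivatives in these variables. *)

Section OPUC.
Variables (C : numClosedFieldType) (n : nat).

Notation MP := {mpoly C[n + n]}.

(* alpha_k and conj(alpha_k) (set to 0 for k >= n, never used there) *)
Definition alpha (k : nat) : MP :=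
  if insub k is Some j then 'X_(lshift n (j : 'I_n)) else 0.
Definition alphab (k : nat) : MP :=
  if insub k is Some j then 'X_(rshift n (j : 'I_n)) else 0.

Definition swapvar (i : 'I_(n + n)) : 'I_(n + n) :=
  match split i with inl j => rshift n j | inr j => lshift n j end.

Definition mconj (p : MP) : MP :=
  mmap (fun c : C => (c^*)%:MP) (fun i => 'X_(swapvar i)) p.

Definition pbr (f g : MP) : MP :=
  \sum_(j < n)
    ('i%:MP * (1 - 'X_(lshift n j) * 'X_(rshift n j)) *
     (f^`M(rshift n j) * g^`M(lshift n j) - f^`M(lshift n j) * g^`M(rshift n j))).

(* reversed polynomial of degree k: P^*(z) = z^k conj(P(1/conj z)) *)
Definition revstar (k : nat) (P : {poly MP}) : {poly MP} :=
  \poly_(i < k.+1) mconj (P`_(k - i)).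

Fixpoint Phi (k : nat) : {poly MP} :=
  if k is k'.+1 then 'X * Phi k' - (alphab k')%:P * revstar k' (Phi k')
  else 1.

Definition Phistar (k : nat) : {poly MP} := revstar k (Phi k).

Definition evalz (P : {poly MP}) (z : C) : MP := P.[z%:MP].

End OPUC.

(* Main.v *)
Require Import Defs.
From HB Require Import structures.
From mathcomp Require Import all_boot all_order all_algebra.
From mathcomp Require Import mpoly ring.
Import Order.TTheory GRing.Theory Num.Theory.
Local Open Scope ring_scope.
Section S.
Variables (C : numClosedFieldType) (n : nat).
Notation MP := {mpoly C[n + n]}.
Implicit Types (p q : MP).
Definition cf : {rmorphism C -> MP} := (@mpolyC (n+n) C) \o (@Num.Def.conjC C).
Definition hv (i : 'I_(n+n)) : MP := 'X_(swapvar i).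
Lemma mconjE (p : MP) : mconj p = mmap cf hv p. Proof. by []. Qed.
Lemma mconjM (p q : MP) : mconj (p * q) = mconj p * mconj q.
Proof. rewrite !mconjE. exact: rmorphM. Qed.
Lemma mconjB (p q : MP) : mconj (p - q) = mconj p - mconj q.
Proof. rewrite !mconjE. exact: rmorphB. Qed.
Lemma mconjD (p q : MP) : mconj (p + q) = mconj p + mconj q.
Proof. rewrite !mconjE. exact: rmorphD. Qed.
Lemma mconj0 : mconj (0 : MP) = 0.
Proof. rewrite !mconjE. exact: rmorph0. Qed.
Lemma mconj1 : mconj (1 : MP) = 1.
Proof. rewrite !mconjE. exact: rmorph1. Qed.
Lemma mconjC c : mconj (c%:MP : MP) = (c^*)%:MP.
Proof. by rewrite mconjE mmapC. Qed.
Lemma mconjX i : mconj ('X_i : MP) = 'X_(swapvar i).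
Proof. by rewrite mconjE mmapX mmap1U. Qed.
Lemma splitl (j : 'I_n) : split (lshift n j) = inl j.
Proof. exact: (unsplitK (inl j)). Qed.
Lemma splitr (j : 'I_n) : split (rshift n j) = inr j.
Proof. exact: (unsplitK (inr j)). Qed.
Lemma swapvarK (i : 'I_(n+n)) : swapvar (swapvar i) = i.
Proof.
rewrite -[i]splitK; case: (split i) => j /=;
by rewrite /swapvar /= ?splitl ?splitr /= ?splitl ?splitr.
Qed.
Lemma mconjK (p : MP) : mconj (mconj p) = p.
Proof.
elim/mpolyind: p => [|c m p _ _ IH]; first by rewrite !mconj0.
rewrite !mconjD IH; congr (_ + _).
rewrite -mul_mpolyC !mconjM !mconjC conjCK; congr (_ * _).
rewrite mpolyXE_id !mconjE !rmorph_prod; apply: eq_bigr => i _.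
rewrite !rmorphXn; congr (_ ^+ _).
change (mconj (mconj ('X_i : MP)) = 'X_i); by rewrite !mconjX swapvarK.
Qed.
Lemma mconj_alphab k : mconj (alphab C n k) = alpha C n k.
Proof.
rewrite /alpha /alphab; case: insubP => [j _ _|_]; last by rewrite mconj0.
by rewrite mconjX /swapvar splitr.
Qed.

Lemma PhiS k : Phi C n k.+1 = 'X * Phi C n k - (alphab C n k)%:P * Phistar C n k.
Proof. by []. Qed.

Lemma Phi_coef_big k i : (k < i)%N -> (Phi C n k)`_i = 0.
Proof.
elim: k i => [|k IH] i hi.
  by rewrite /= coef1; case: i hi.
rewrite PhiS coefB coefXM coefCM /Phistar /revstar coef_poly.
case: i hi => // i hi /=.
by rewrite IH // ltnNge ltnW //= mulr0 subr0.
Qed.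

Lemma Phistar0 : Phistar C n 0 = 1.
Proof.
apply/polyP => i; rewrite /Phistar /revstar coef_poly coef1.
case: i => [|i] //=.
by rewrite coef1 /= mconj1.
Qed.

Lemma PhistarS k : Phistar C n k.+1 = Phistar C n k - (alpha C n k)%:P * ('X * Phi C n k).
Proof.
apply/polyP => i.
rewrite coefB coefCM coefXM {1}/Phistar /revstar coef_poly PhiS.
case: ltnP => hi.
  rewrite coefB coefXM coefCM mconjB mconjM mconj_alphab.
  rewrite /Phistar /revstar !coef_poly.
  case: i hi => [|i] hi.
    by rewrite subn0 /= ltnn /= subn0 mconj0 mulr0 subr0.
  rewrite subSS /=.
  have [->|neq] := eqVneq i k.
    by rewrite subnn /= ltnn mconj0 mconjK subn0 sub0r.
  have ik : (i < k)%N by rewrite ltn_neqAle neq -ltnS.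
  rewrite subn_eq0 (leqNgt k i) ik /= !ltnS ik leq_subr subKn ?(ltnW ik) // mconjK.
  by rewrite -subnS.
rewrite /Phistar /revstar coef_poly ltnNge ltnW //= Phi_coef_big.
  by case: i hi => // i hi; rewrite mulr0 subr0.
by case: i hi => // i hi /=; rewrite -ltnS.
Qed.

Lemma dX (i j : 'I_(n+n)) : ('X_i : MP)^`M(j) = (i == j)%:R.
Proof.
rewrite mderivX mnm1E; case: eqVneq => [<-|ne] /=.
  have -> : (U_(i) - U_(i))%MM = 0%MM by apply/mnmP => k; rewrite mnmBE subnn mnm0E.
  by rewrite mpolyX0 scale1r.
by rewrite scale0r.
Qed.

Lemma alphaE (j : 'I_n) : alpha C n j = 'X_(lshift n j).
Proof. by rewrite /alpha; case: insubP => [j' _ /val_inj ->|]; rewrite ?ltn_ord. Qed.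
Lemma alphabE (j : 'I_n) : alphab C n j = 'X_(rshift n j).
Proof. by rewrite /alphab; case: insubP => [j' _ /val_inj ->|]; rewrite ?ltn_ord. Qed.

Definition indep k (p : MP) := forall j : 'I_n, (k <= j)%N ->
  p^`M(lshift n j) = 0 /\ p^`M(rshift n j) = 0.

Lemma indepC k c : indep k c%:MP.
Proof. by move=> j _; rewrite !mderivC. Qed.
Lemma indepD k p q : indep k p -> indep k q -> indep k (p + q).
Proof.
move=> hp hq j hj; have [a b] := hp j hj; have [c d] := hq j hj.
by rewrite !mderivD a b c d addr0.
Qed.
Lemma indepN k p : indep k p -> indep k (- p).
Proof. by move=> hp j hj; have [a b] := hp j hj; rewrite !mderivN a b oppr0. Qed.
Lemma indepM k p q : indep k p -> indep k q -> indep k (p * q).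
Proof.
move=> hp hq j hj; have [a b] := hp j hj; have [c d] := hq j hj.
by rewrite !mderivM a b c d !mulr0 !mul0r addr0.
Qed.
Lemma indepS k p : indep k p -> indep k.+1 p.
Proof. by move=> hp j hj; apply: hp; apply: ltnW. Qed.
Lemma indep_alpha k : indep k.+1 (alpha C n k) /\ indep k.+1 (alphab C n k).
Proof.
rewrite /alpha /alphab; case: insubP => [j' _ ej|_]; last by split; move=> j _; rewrite !mderiv0.
have ne : forall j : 'I_n, (k.+1 <= j)%N -> (j' == j) = false.
  move=> j hj; apply/negbTE/eqP => e; move: hj; by rewrite -e ej ltnn.
split=> j hj; rewrite !dX ?(inj_eq (@lshift_inj _ _)) ?(inj_eq (@rshift_inj _ _)) ne //
  ?eq_lrshift //; by rewrite eq_sym eq_lrshift.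
Qed.

Definition f k z : MP := evalz (Phi C n k) z.
Definition g k z : MP := evalz (Phistar C n k) z.

Lemma fS k z : f k.+1 z = z%:MP * f k z - alphab C n k * g k z.
Proof. by rewrite /f /g /evalz PhiS !hornerE. Qed.
Lemma gS k z : g k.+1 z = g k z - alpha C n k * (z%:MP * f k z).
Proof. by rewrite /f /g /evalz PhistarS !hornerE. Qed.
Lemma f0 z : f 0 z = 1.
Proof. by rewrite /f /evalz /= hornerE. Qed.
Lemma g0 z : g 0 z = 1.
Proof. by rewrite /g /evalz Phistar0 hornerE. Qed.

Lemma indep_fg k z : indep k (f k z) /\ indep k (g k z).
Proof.
elim: k => [|k [IHf IHg]].
  by rewrite f0 g0 -mpolyC1; split; apply: indepC.
have [ia ib] := indep_alpha k.
rewrite fS gS; split.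
  apply: indepD; first by apply: indepM; [apply: indepC| apply: indepS].
  by apply/indepN/indepM => //; apply: indepS.
apply: indepD; first by apply: indepS.
apply/indepN/indepM => //; apply: indepM; [apply: indepC| exact: indepS].
Qed.

Lemma pbrDl (p1 p2 : MP) q : pbr (p1 + p2) q = pbr p1 q + pbr p2 q.
Proof. rewrite /pbr -big_split; apply: eq_bigr => j _ /=; rewrite !mderivD. ring. Qed.
Lemma pbrNl p q : pbr (- p) q = - pbr p q.
Proof. rewrite /pbr -sumrN; apply: eq_bigr => j _ /=; rewrite !mderivN; ring. Qed.
Lemma pbrMl (p1 p2 : MP) q : pbr (p1 * p2) q = p1 * pbr p2 q + p2 * pbr p1 q.
Proof. rewrite /pbr !mulr_sumr -big_split; apply: eq_bigr => j _ /=; rewrite !mderivM; ring. Qed.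
Lemma pbrCl c q : pbr (c%:MP) q = 0.
Proof. by rewrite /pbr big1 // => j _; rewrite !mderivC; ring. Qed.
Lemma pbrA p q : pbr p q = - pbr q p.
Proof. rewrite /pbr -sumrN; apply: eq_bigr => j _; ring. Qed.
Lemma pbrDr p (q1 q2 : MP) : pbr p (q1 + q2) = pbr p q1 + pbr p q2.
Proof. by rewrite pbrA pbrDl opprD -!pbrA. Qed.
Lemma pbrNr p q : pbr p (- q) = - pbr p q.
Proof. by rewrite pbrA pbrNl opprK -pbrA. Qed.
Lemma pbrMr p (q1 q2 : MP) : pbr p (q1 * q2) = q1 * pbr p q2 + q2 * pbr p q1.
Proof. by rewrite pbrA pbrMl opprD -!mulrN -!pbrA. Qed.
Lemma pbrCr c p : pbr p (c%:MP) = 0.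
Proof. by rewrite pbrA pbrCl oppr0. Qed.
Lemma pbr_xx p : pbr p p = 0.
Proof. by rewrite /pbr big1 // => j _; ring. Qed.

Lemma pbr_indep (j : 'I_n) p : p^`M(lshift n j) = 0 -> p^`M(rshift n j) = 0 ->
  pbr p ('X_(lshift n j) : MP) = 0 /\ pbr p ('X_(rshift n j) : MP) = 0.
Proof.
move=> ha hb; split; apply: big1 => i _;
rewrite !dX ?(inj_eq (@lshift_inj _ _)) ?(inj_eq (@rshift_inj _ _)) ?eq_lrshift
  ?(eq_sym (rshift _ _)) ?eq_lrshift; case: eqVneq => [<-|_] /=;
rewrite ?ha ?hb; ring.
Qed.

Lemma pbr_ba (j : 'I_n) :
  pbr ('X_(rshift n j) : MP) 'X_(lshift n j) = 'i%:MP * (1 - 'X_(lshift n j) * 'X_(rshift n j)).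
Proof.
rewrite /pbr (bigD1 j) //= big1 ?addr0.
  rewrite !dX !eqxx eq_lrshift (eq_sym (rshift _ _)) eq_lrshift /=; ring.
move=> i ne; rewrite !dX !(inj_eq (@rshift_inj _ _)) !(inj_eq (@lshift_inj _ _)).
rewrite eq_lrshift (eq_sym (rshift _ _)) eq_lrshift (eq_sym j) (negbTE ne) /=; ring.
Qed.

Lemma main k : (k <= n)%N -> forall z w : C, z != w ->
  pbr (f k z) (f k w) = 0 /\ pbr (g k z) (g k w) = 0 /\
  pbr (f k z) (g k w) =
    'i%:MP * w%:MP * (((z - w)^-1)%:MP * (f k z * g k w - f k w * g k z)).
Proof.
elim: k => [_ z w _|k IH hk z w zw].
  by rewrite !f0 !g0 -mpolyC1 !pbrCl subrr mulr0 mulr0.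
have [A1 [B1 C1]] := IH (ltnW hk) z w zw.
have wz : w != z by rewrite eq_sym.
have [A2 [B2 C2]] := IH (ltnW hk) w z wz.
pose j0 : 'I_n := Ordinal hk.
have ea : alpha C n k = 'X_(lshift n j0) by rewrite -alphaE.
have eb : alphab C n k = 'X_(rshift n j0) by rewrite -alphabE.
have kk : (k <= Ordinal hk)%N by [].
have [fza [fzb [gza gzb]]] : (f k z)^`M(lshift n j0) = 0 /\ (f k z)^`M(rshift n j0) = 0
  /\ (g k z)^`M(lshift n j0) = 0 /\ (g k z)^`M(rshift n j0) = 0.
  by have [h1 h2] := indep_fg k z; have := h1 _ kk; have := h2 _ kk; tauto.
have [fwa [fwb [gwa gwb]]] : (f k w)^`M(lshift n j0) = 0 /\ (f k w)^`M(rshift n j0) = 0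
  /\ (g k w)^`M(lshift n j0) = 0 /\ (g k w)^`M(rshift n j0) = 0.
  by have [h1 h2] := indep_fg k w; have := h1 _ kk; have := h2 _ kk; tauto.
have [P1 P2] := pbr_indep _ _ fza fzb.
have [P3 P4] := pbr_indep _ _ gza gzb.
have [P5 P6] := pbr_indep _ _ fwa fwb.
have [P7 P8] := pbr_indep _ _ gwa gwb.
rewrite !fS !gS ea eb.
rewrite !(pbrDl, pbrDr, pbrNl, pbrNr, pbrMl, pbrMr, pbrCl, pbrCr).
rewrite !pbr_xx A1 B1 C1 (pbrA (g k z) (f k w)) C2.
rewrite (pbrA _ (f k w)) (pbrA _ (g k w)) ?P1 ?P2 ?P3 ?P4 ?P5 ?P6 ?P7 ?P8.
rewrite (pbrA 'X_(lshift n j0) (g k w)) (pbrA 'X_(lshift n j0) (f k w)) P5 P7 pbr_ba.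
have hu : (z%:MP - w%:MP) * ((z - w)^-1)%:MP = 1 :> MP.
  by rewrite -mpolyCB -mpolyCM mulfV ?subr_eq0 // mpolyC1.
have -> : (w - z)^-1 = - (z - w)^-1 by rewrite -opprB invrN.
rewrite mpolyCN.
move: hu; set u := ((z - w)^-1)%:MP => hu.
split; first by ring.
split; first by ring.
apply/eqP; rewrite -subr_eq0; apply/eqP.
transitivity ('i%:MP * w%:MP * (1 - 'X_(lshift n j0) * 'X_(rshift n j0)) * g k z * f k w
  * (1 - (z%:MP - w%:MP) * u) : MP); first by ring.
by rewrite hu subrr mulr0.
Qed.

End S.

Theorem theorem13p6 (C : numClosedFieldType) (n : nat) (z w : C) :
  (1 <= n)%N -> z != w ->
  let P z := evalz (Phi C n n.-1) z in
  let Ps z := evalz (Phistar C n n.-1) z in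
  let Q := (z - w)^-1 *: (P z * Ps w - P w * Ps z) in
  pbr (P z) (evalz (Phi C n n) w)
    = - 'i%:MP * alphab C n n.-1 * w%:MP * Q /\
  pbr (evalz (Phi C n n) z) (Ps w)
    = 'i%:MP * (z * w)%:MP * Q.
Proof.
move=> hn zw P Ps Q.
have hk : (n.-1 < n)%N by rewrite prednK.
have [A [B C1]] := main C n n.-1 (ltnW hk) z w zw.
pose j0 : 'I_n := Ordinal hk.
have kk : (n.-1 <= j0)%N by rewrite leqnn.
have eb : alphab C n n.-1 = 'X_(rshift n j0) by rewrite -alphabE.
have [[h1 _] [_ h2]] := (indep_fg C n n.-1 z, indep_fg C n n.-1 w).
have [fza fzb] := h1 _ kk.
have [gwa gwb] := h2 _ kk.
have [_ P2] := pbr_indep _ _ _ _ fza fzb.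
have [_ P4] := pbr_indep _ _ _ _ gwa gwb.
have eP : Phi C n n = Phi C n n.-1.+1 by rewrite prednK.
rewrite /Q /P /Ps eP -mul_mpolyC.
rewrite -[evalz (Phi C n n.-1) z]/(f C n n.-1 z) -[evalz (Phi C n n.-1) w]/(f C n n.-1 w).
rewrite -[evalz (Phistar C n n.-1) z]/(g C n n.-1 z) -[evalz (Phistar C n n.-1) w]/(g C n n.-1 w).
rewrite -[evalz (Phi C n n.-1.+1) z]/(f C n n.-1.+1 z) -[evalz (Phi C n n.-1.+1) w]/(f C n n.-1.+1 w).
rewrite !fS eb.
rewrite !(pbrDl, pbrDr, pbrNl, pbrNr, pbrMl, pbrMr, pbrCl, pbrCr).
rewrite A B C1 P2 (pbrA _ _ 'X_(rshift n j0) (g C n n.-1 w)) P4 mpolyCM.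
split; ring.
Qed.
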